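(* Let $R$ be a ring, $S\in\mathrm{Den}_l(R,\mathfrak a)$, $\pi:R\to R/\mathfrak a$, $a\mapsto a+\mathfrak a$, and $\sigma:R\to S^{-1}R$, $r\mapsto r/1$ (so $R/\mathfrak a$ is identified with the subring $\sigma(R)$ of $S^{-1}R$). (1) Let $T\in\mathrm{Den}_l(S^{-1}R,0)$ be such that $\sigma(S)\subseteq T$ and $\{\sigma(s)^{-1}\mid s\in S\}\subseteq T$. Then $T':=\sigma^{-1}(T)\in\mathrm{Den}_l(R,\mathfrak a)$, $T'$ is $S$-saturated, $T=\{\sigma(s)^{-1}\sigma(t')\mid s\in S, t'\in T'\}$, the natural ring homomorphism $S^{-1}R\to T'^{-1}R$ is injective, and $T'^{-1}R\cong T^{-1}(S^{-1}R)$ naturally. (2) $\pi^{-1}(S_0(R/\mathfrak a))=S_{\mathfrak a}(R)$, $\pi(S_{\mathfrak a}(R))=S_0(R/\mathfrak a)$, and $Q_{\mathfrak a}(R):=S_{\mathfrak a}(R)^{-1}R\cong Q_l(R/\mathfrak a)$.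
   Context: Rings are associative with $1$. A multiplicatively closed subset $S$ ($1\in S$, $0\notin S$, closed under products) is a left Ore set if $Sr\cap Rs\ne\emptyset$ for all $r\in R,s\in S$; $\mathrm{ass}(S):=\{r\mid sr=0\text{ for some }s\in S\}$; it is a left denominator set if moreover $rs=0$ ($s\in S$) implies $tr=0$ for some $t\in S$. $\mathrm{Den}_l(R,\mathfrak a)$ is the set of left denominator sets $S$ with $\mathrm{ass}(S)=\mathfrak a$; it has a largest element under inclusion, $S_{\mathfrak a}(R)$. $S_0(A)$ denotes the largest element of $\mathrm{Den}_l(A,0)$ for a ring $A$, and $Q_l(A):=S_0(A)^{-1}A$. For $S,T'\in\mathrm{Den}_l(R)$, $T'$ is $S$-saturated if $sr\in T'$ ($s\in S,r\in R$) implies $r\in T'$, and $r's'\in T'$ ($s'\in S,r'\in R$) implies $r'\in T'$. *)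

(* Defs.v *)
From HB Require Import structures.
From mathcomp Require Import all_boot all_algebra.
Set Implicit Arguments. Unset Strict Implicit. Unset Printing Implicit Defensive.
Import GRing.Theory.
Local Open Scope ring_scope.

Definition mult_closed (R : nzRingType) (S : R -> Prop) : Prop :=
  S 1 /\ ~ S 0 /\ (forall x y, S x -> S y -> S (x * y)).

Definition left_ore (R : nzRingType) (S : R -> Prop) : Prop :=
  mult_closed S /\
  (forall r s, S s -> exists s' r', S s' /\ s' * r = r' * s).

Definition ass (R : nzRingType) (S : R -> Prop) (r : R) : Prop :=
  exists s, S s /\ s * r = 0.

Definition left_den (R : nzRingType) (S : R -> Prop) : Prop :=
  left_ore S /\
  (forall r s, S s -> r * s = 0 -> exists t, S t /\ t * r = 0).

Definition Den_l (R : nzRingType) (a : R -> Prop) (S : R -> Prop) : Prop :=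
  left_den S /\ (forall r, ass S r <-> a r).

Definition largest_Den_l (R : nzRingType) (a : R -> Prop) (S : R -> Prop) : Prop :=
  Den_l a S /\ (forall S', Den_l a S' -> forall x, S' x -> S x).

Definition S_saturated (R : nzRingType) (S T' : R -> Prop) : Prop :=
  (forall s r, S s -> T' (s * r) -> T' r) /\
  (forall s r, S s -> T' (r * s) -> T' r).

(* (Q, sigma) is a left ring of fractions S^{-1}R of R at S:
   sigma(s) is a unit for s in S, every element is sigma(s)^{-1} sigma(r),
   and ker sigma = ass(S). *)
Definition is_left_loc (R : nzRingType) (S : R -> Prop) (Q : unitRingType)
  (sigma : {rmorphism R -> Q}) : Prop :=
  (forall s, S s -> sigma s \is a GRing.unit) /\
  (forall q : Q, exists s r, S s /\ q = (sigma s)^-1 * sigma r) /\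
  (forall r, sigma r = 0 <-> ass S r).

(* Main.v *)
Require Import Defs.
From HB Require Import structures.
From mathcomp Require Import all_boot all_algebra.
From Stdlib Require Import ClassicalEpsilon.
Import GRing.Theory.
Local Open Scope ring_scope.

Definition mk_rmorph (Q B : pzSemiRingType) (f : Q -> B) (h1 : nmod_morphism f)
  (h2 : GRing.monoid_morphism f) : {rmorphism Q -> B} :=
  HB.pack f (GRing.isNmodMorphism.Build _ _ f h1) (GRing.isMonoidMorphism.Build _ _ f h2).

Lemma add_frac (R : nzRingType) (B : unitRingType) (h : {rmorphism R -> B})
  s1 r1 s2 r2 s' r' : h s' \is a GRing.unit -> h s1 \is a GRing.unit ->
  h s2 \is a GRing.unit -> s' * s2 = r' * s1 ->
  (h s1)^-1 * h r1 + (h s2)^-1 * h r2 = (h (s' * s2))^-1 * h (r' * r1 + s' * r2).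
Proof.
move=> u' u1 u2 e.
have uu : h (s' * s2) \is a GRing.unit by rewrite rmorphM unitrMl.
apply: (mulrI uu); rewrite mulrA mulrV // mul1r mulrDr.
rewrite {1}e !rmorphM !mulrA -(mulrA _ (h s1)) mulrV // mulr1.
by rewrite -(mulrA _ (h s2)) mulrV // mulr1 rmorphD !rmorphM.
Qed.

Lemma mul_frac (R : nzRingType) (B : unitRingType) (h : {rmorphism R -> B})
  s1 r1 s2 r2 s' r' : h s' \is a GRing.unit -> h s1 \is a GRing.unit ->
  h s2 \is a GRing.unit -> s' * r1 = r' * s2 ->
  (h s1)^-1 * h r1 * ((h s2)^-1 * h r2) = (h (s' * s1))^-1 * h (r' * r2).
Proof.
move=> u' u1 u2 e.
have uu : h (s' * s1) \is a GRing.unit by rewrite rmorphM unitrMl.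
apply: (mulrI uu); rewrite [RHS]mulrA mulrV // mul1r rmorphM.
rewrite !mulrA -(mulrA _ (h s1)) mulrV // mulr1 -rmorphM e rmorphM.
by rewrite -(mulrA _ (h s2)) mulrV // mulr1 rmorphM.
Qed.

Arguments add_frac {R B} h {s1 r1 s2 r2 s' r'}.
Arguments mul_frac {R B} h {s1 r1 s2 r2 s' r'}.

Lemma loc_ext (R : nzRingType) (S : R -> Prop) (hO : left_ore S)
  (Q : unitRingType) (sg : {rmorphism R -> Q}) (hQ : is_left_loc S sg)
  (B : unitRingType) (f : {rmorphism R -> B})
  (hfu : forall s, S s -> f s \is a GRing.unit)
  (hfa : forall r, ass S r -> f r = 0) :
  exists g : {rmorphism Q -> B}, forall r, g (sg r) = f r.
Proof.
case: hO => [[S1 [S0 SM]] SO]; case: hQ => [hu [hs hk]].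
have wd : forall s1 r1 s2 r2, S s1 -> S s2 ->
    (sg s1)^-1 * sg r1 = (sg s2)^-1 * sg r2 -> (f s1)^-1 * f r1 = (f s2)^-1 * f r2.
  move=> s1 r1 s2 r2 h1 h2 e.
  have [s' [r' [h' e']]] := SO s2 s1 h1.
  have E : forall (B' : unitRingType) (h : {rmorphism R -> B'}),
      h s' \is a GRing.unit -> h s1 \is a GRing.unit -> h s2 \is a GRing.unit ->
      (h s1)^-1 * h r1 = (h s2)^-1 * h r2 <-> h (r' * r1) = h (s' * r2).
    move=> B' h u' u1 u2.
    have uu : h s' * h s2 \is a GRing.unit by rewrite unitrMl.
    have ee : h s' * h s2 = h r' * h s1 by rewrite -!rmorphM e'.
    split=> [ee2|ee2].
      have := congr1 (fun z => h s' * h s2 * z) ee2.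
      rewrite {1}ee !mulrA -(mulrA _ (h s1)) mulrV // -(mulrA _ (h s2)) mulrV //.
      by rewrite !mulr1 -!rmorphM.
    apply: (mulrI uu); rewrite {1}ee !mulrA -(mulrA _ (h s1)) mulrV //.
    by rewrite -(mulrA _ (h s2)) mulrV // !mulr1 -!rmorphM.
  apply/(E _ f (hfu _ h') (hfu _ h1) (hfu _ h2)).
  have /(E _ sg (hu _ h') (hu _ h1) (hu _ h2)) := e.
  move=> e2; apply/eqP; rewrite -subr_eq0 -rmorphB; apply/eqP; apply: hfa.
  by apply/hk; rewrite rmorphB e2 subrr.
have rep : forall q, {p : R * R | S p.1 /\ q = (sg p.1)^-1 * sg p.2}.
  move=> q; apply: constructive_indefinite_description.
  by have [s [r [h e]]] := hs q; exists (s, r).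
pose g q := (f (sval (rep q)).1)^-1 * f (sval (rep q)).2.
have gE : forall s r, S s -> g ((sg s)^-1 * sg r) = (f s)^-1 * f r.
  move=> s r h; rewrite /g; case: (rep _) => [[s0 r0] [/= h0 e0]].
  by apply: wd => //; rewrite -e0.
have gs : forall r, g (sg r) = f r.
  by move=> r; rewrite -[sg r]mul1r -invr1 -(rmorph1 sg) gE // rmorph1 invr1 mul1r.
have gadd : nmod_morphism g.
  split; first by rewrite -(rmorph0 sg) gs rmorph0.
  move=> q1 q2.
  have [s1 [r1 [h1 ->]]] := hs q1; have [s2 [r2 [h2 ->]]] := hs q2.
  have [s' [r' [h' e']]] := SO s2 s1 h1.
  have hd : S (s' * s2) by apply: SM.
  rewrite (add_frac sg (hu _ h') (hu _ h1) (hu _ h2) e') !gE //.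
  by rewrite (add_frac f (hfu _ h') (hfu _ h1) (hfu _ h2) e').
have gmul : GRing.monoid_morphism g.
  split; first by rewrite -(rmorph1 sg) gs rmorph1.
  move=> p1 p2.
  have [s1 [r1 [h1 ->]]] := hs p1; have [s2 [r2 [h2 ->]]] := hs p2.
  have [s' [r' [h' e']]] := SO r1 s2 h2.
  have hd : S (s' * s1) by apply: SM.
  rewrite (mul_frac sg (hu _ h') (hu _ h1) (hu _ h2) e') !gE //.
  by rewrite (mul_frac f (hfu _ h') (hfu _ h1) (hfu _ h2) e').
by exists (@mk_rmorph _ _ g gadd gmul) => r; exact: gs.
Qed.

Arguments loc_ext {R S} hO {Q sg} hQ {B} f hfu hfa.

Lemma loc_uniq (R : nzRingType) (S : R -> Prop)
  (Q : unitRingType) (sg : {rmorphism R -> Q}) (hQ : is_left_loc S sg)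
  (B : unitRingType) (g1 g2 : {rmorphism Q -> B})
  (h : forall r, g1 (sg r) = g2 (sg r)) : forall q, g1 q = g2 q.
Proof.
case: hQ => [hu [hs hk]] q; have [s [r [hs1 ->]]] := hs q.
by rewrite !rmorphM !rmorphV ?hu // !h.
Qed.

Arguments loc_uniq {R S Q sg} hQ {B} g1 g2 h q.

Lemma loc_iso (R : nzRingType) (S : R -> Prop) (hO : left_ore S)
  (Q1 : unitRingType) (sg1 : {rmorphism R -> Q1}) (h1 : is_left_loc S sg1)
  (Q2 : unitRingType) (sg2 : {rmorphism R -> Q2}) (h2 : is_left_loc S sg2) :
  exists phi : {rmorphism Q1 -> Q2}, bijective phi /\ forall r, phi (sg1 r) = sg2 r.
Proof.
have [phi hphi] : exists phi : {rmorphism Q1 -> Q2}, forall r, phi (sg1 r) = sg2 r.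
  apply: (loc_ext hO h1 sg2); first by move=> s hs; apply: h2.1.
  by move=> r hr; apply/h2.2.2.
have [chi hchi] : exists chi : {rmorphism Q2 -> Q1}, forall r, chi (sg2 r) = sg1 r.
  apply: (loc_ext hO h2 sg1); first by move=> s hs; apply: h1.1.
  by move=> r hr; apply/h1.2.2.
exists phi; split=> //; exists chi.
  move=> q; apply: (loc_uniq h1 (chi \o phi) idfun).
  by move=> r /=; rewrite hphi hchi.
move=> q; apply: (loc_uniq h2 (phi \o chi) idfun).
by move=> r /=; rewrite hchi hphi.
Qed.
Arguments loc_iso {R S} hO {Q1 sg1} h1 {Q2 sg2} h2.

Theorem lemma3p3
  (R : nzRingType) (a : R -> Prop) (S : R -> Prop) (hS : Den_l a S)
  (Q : unitRingType) (sigma : {rmorphism R -> Q}) (hQ : is_left_loc S sigma)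
  (A : nzRingType) (pi : {rmorphism R -> A})
  (hpi_surj : forall x : A, exists r, x = pi r)
  (hpi_ker : forall r, pi r = 0 <-> a r) :
  (* (1) *)
  (forall T : Q -> Prop,
     Den_l (fun q : Q => q = 0) T ->
     (forall s, S s -> T (sigma s)) ->
     (forall s, S s -> T ((sigma s)^-1)) ->
     let T' := fun r : R => T (sigma r) in
     [/\ Den_l a T',
         S_saturated S T',
         (forall q : Q, T q <-> exists s t', S s /\ T' t' /\ q = (sigma s)^-1 * sigma t')
       & forall (Q' : unitRingType) (sigma' : {rmorphism R -> Q'}),
           is_left_loc T' sigma' ->
           (exists psi : {rmorphism Q -> Q'},
              (forall r, psi (sigma r) = sigma' r) /\ injective psi) /\
           (forall (Q'' : unitRingType) (tau : {rmorphism Q -> Q''}),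
              is_left_loc T tau ->
              exists phi : {rmorphism Q' -> Q''},
                bijective phi /\ (forall r, phi (sigma' r) = tau (sigma r)))]) /\
  (* (2) *)
  (forall (Sa : R -> Prop) (S0 : A -> Prop),
     largest_Den_l a Sa ->
     largest_Den_l (fun x : A => x = 0) S0 ->
     [/\ (forall r, S0 (pi r) <-> Sa r),
         (forall x : A, S0 x <-> exists r, Sa r /\ x = pi r)
       & forall (Qa : unitRingType) (siga : {rmorphism R -> Qa}),
           is_left_loc Sa siga ->
           forall (Ql : unitRingType) (tau : {rmorphism A -> Ql}),
             is_left_loc S0 tau ->
             exists phi : {rmorphism Qa -> Ql},
               bijective phi /\ (forall r, phi (siga r) = tau (pi r))]).
Proof.
have hSore : left_ore S := hS.1.1.
have hSc := hS.
case: hS => [[[[S1 [S0n SM]] SO] SL] SA].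
case: hQ => [hu [hs hk]].
have Sak : forall r, a r <-> sigma r = 0.
  by move=> r; rewrite -SA hk.
split.
  move=> T [[[[T1 [T0 TM]] TO] TL] TA] hTS hTSi T'.
  have T'den : Den_l a T'.
    split; last first.
      move=> r; rewrite Sak; split.
        case=> t [ht e]; apply/TA; exists (sigma t); split=> //.
        by rewrite -rmorphM e rmorph0.
      by move/hk=> [s [hs1 e]]; exists s; split=> //; apply: (hTS).
    split.
      split; first (split; [| split]).
      - by rewrite /T' rmorph1.
      - by rewrite /T' rmorph0.
      - by move=> x y; rewrite /T' rmorphM; apply: (TM).
      move=> r t ht.
      have [u [v [hu' e]]] := TO (sigma r) (sigma t) ht.
      have [s1 [x [h1 ex]]] := hs u; have [s2 [y [h2 ey]]] := hs v.
      have [s' [r' [h' e']]] := SO s2 s1 h1.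
      have du : sigma (s' * s2) * u = sigma (r' * x).
        by rewrite e' ex !rmorphM !mulrA mulrK ?hu.
      have dv : sigma (s' * s2) * v = sigma (s' * y).
        by rewrite ey !rmorphM !mulrA mulrK ?hu.
      have : sigma (r' * x * r - s' * y * t) = 0.
        by rewrite rmorphB (rmorphM sigma (r' * x)) (rmorphM sigma (s' * y)) -du -dv -!mulrA e subrr.
      move/hk=> [w [hw ew]].
      exists (w * (r' * x)), (w * (s' * y)); split.
        rewrite /T' rmorphM -du mulrA; apply: (TM) => //.
        by apply: (TM); apply: (hTS) => //; apply: (SM).
      by apply/eqP; rewrite -subr_eq0 -!(mulrA w) -mulrBr ew.
    move=> r t ht e.
    have : sigma r * sigma t = 0 by rewrite -rmorphM e rmorph0.
    move/(TL _ _ ht)=> [u [hu' eu]].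
    have [s [x [h1 ex]]] := hs u.
    have sx : sigma x = sigma s * u by rewrite ex mulVKr ?hu.
    have : sigma (x * r) = 0 by rewrite rmorphM sx -mulrA eu mulr0.
    move/hk=> [w [hw ew]].
    exists (w * x); split; last by rewrite -mulrA.
    by rewrite /T' rmorphM sx mulrA; apply: (TM) => //; apply: (TM); apply: (hTS).
  have T'ass : forall r, ass T' r <-> a r := T'den.2.
  have hchar : forall q : Q, T q <-> exists s t', S s /\ T' t' /\ q = (sigma s)^-1 * sigma t'.
    move=> q; split.
      move=> hq; have [s [r [h1 e]]] := hs q.
      exists s, r; split=> //; split=> //.
      have sr : sigma r = sigma s * q by rewrite e mulVKr ?hu.
      by rewrite /T' sr; apply: (TM) => //; apply: (hTS).
    by move=> [s [t' [h1 [h2 ->]]]]; apply: (TM) => //; apply: (hTSi).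
  split=> //.
    split; move=> s r h1; rewrite /T' rmorphM => h.
      by have := TM _ _ (hTSi s h1) h; rewrite mulKr ?hu.
    by have := TM _ _ h (hTSi s h1); rewrite mulrK ?hu.
  move=> Q' sg' [hu' [hs' hk']]; split.
    have [psi hpsi] := loc_ext hSore (conj hu (conj hs hk)) sg'
       (fun s h1 => hu' s (hTS s h1))
       (fun r h1 => proj2 (hk' r) (proj2 (T'ass r) (proj1 (SA r) h1))).
    exists psi; split=> // q1 q2 e.
    have H0 : forall q, psi q = 0 -> q = 0.
      move=> q; have [s [r [h1 ->]]] := hs q.
      rewrite rmorphM rmorphV ?hu // !hpsi => e0.
      have : sg' r = 0.
        by rewrite -(mulVKr (hu' s (hTS s h1)) (sg' r)) e0 mulr0.
      by move/hk'/T'ass/Sak=> ->; rewrite mulr0.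
    by apply/eqP; rewrite -subr_eq0; apply/eqP; apply: (H0); rewrite rmorphB e subrr.
  move=> Q'' tau [htu [hts htk]].
  have hl : is_left_loc T' (tau \o sigma).
    split; first by move=> r hr; apply: (htu).
    split; last first.
      by move=> r /=; rewrite htk T'ass Sak TA.
    move=> q''; have [t [q [ht ->]]] := hts q''.
    have [s [t' [h1 [h2 ->]]]] := (proj1 (hchar t)) ht.
    have [s2 [r [h3 ->]]] := hs q.
    have [s' [r' [h' e']]] := SO s s2 h3.
    have uS : forall z, S z -> tau (sigma z) \is a GRing.unit.
      by move=> z hz; apply: (htu); apply: (hTS).
    exists (s' * t'), (r' * r); split.
      by rewrite /T' rmorphM; apply: (TM) => //; apply: (hTS).
    have ut' : tau (sigma t') \is a GRing.unit := htu _ h2.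
    rewrite /= !rmorphM !rmorphV ?hu // invrM ?unitrV ?(uS _ h1) ?ut' // invrK.
    have E : tau (sigma s) * (tau (sigma s2))^-1 = (tau (sigma s'))^-1 * tau (sigma r').
      apply: (mulrI (uS _ h')); rewrite mulVKr ?uS // mulrA -!rmorphM e' !rmorphM.
      by rewrite mulrK ?uS.
    by rewrite (invrM (uS _ h') ut') -!mulrA; congr (_ * _); rewrite !mulrA E -!mulrA.
  have [phi [bphi hphi]] := loc_iso T'den.1.1 (conj hu' (conj hs' hk')) hl.
  by exists phi; split.
move=> Sa S0 [hSa hSamax] [hS0 hS0max].
case: (hS0) => [[[[O1 [O0 OM]] OO] OL] OA].
have img : forall D, Den_l a D ->
    Den_l (fun x : A => x = 0) (fun x => exists d, D d /\ x = pi d).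
  move=> D [[[[D1 [D0 DM]] DO] DL] DA].
  split; last first.
    move=> x; have [r ->] := hpi_surj x; split.
      case=> y [[d [hd ->]] e].
      have : a (d * r) by apply/hpi_ker; rewrite rmorphM.
      move/(proj2 (DA _))=> [e' [he' ee]].
      apply/hpi_ker/(proj1 (DA _)); exists (e' * d); split; first exact: (DM).
      by rewrite -mulrA.
    move=> e; exists 1; split; first by exists 1; rewrite rmorph1.
    by rewrite e mulr0.
  split.
    split; first (split; [|split]).
    - by exists 1; rewrite rmorph1.
    - case=> d [hd e].
      have : a d by apply/hpi_ker.
      move/(proj2 (DA _))=> [e' [he' ee]].
      by apply: D0; rewrite -ee; apply: (DM).
    - move=> x y [d1 [h1 ->]] [d2 [h2 ->]]; exists (d1 * d2); split.
        exact: (DM).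
      by rewrite rmorphM.
    move=> x y [d [hd ->]]; have [r ->] := hpi_surj x.
    have [d' [r' [h' e]]] := DO r d hd.
    exists (pi d'), (pi r'); split; first by exists d'.
    by rewrite -!rmorphM e.
  move=> x y [d [hd ->]]; have [r ->] := hpi_surj x => e.
  have : a (r * d) by apply/hpi_ker; rewrite rmorphM.
  move/(proj2 (DA _))=> [e' [he' ee]].
  have ee2 : e' * r * d = 0 by rewrite -mulrA.
  have [t [ht et]] := DL (e' * r) d hd ee2.
  exists (pi (t * e')); split; first by exists (t * e'); split=> //; apply: (DM).
  by rewrite -rmorphM -mulrA et rmorph0.
have SinS0 : forall r, S r -> S0 (pi r).
  by move=> r h; apply: (hS0max _ (img S hSc)); exists r.
have SainS0 : forall r, Sa r -> S0 (pi r).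
  by move=> r h; apply: (hS0max _ (img Sa hSa)); exists r.
have U_den : Den_l a (fun r => S0 (pi r)).
  split; last first.
    move=> r; split.
      case=> u [hu0 e].
      have : ass S0 (pi r) by exists (pi u); split=> //; rewrite -rmorphM e rmorph0.
      by move/(proj1 (OA _))/hpi_ker.
    move/(proj2 (SA _))=> [s [hs0 e]]; exists s; split=> //; exact: SinS0.
  split.
    split; first (split; [|split]).
    - by rewrite rmorph1.
    - by rewrite rmorph0.
    - by move=> x y hx hy; rewrite rmorphM; apply: (OM).
    move=> r u hu0.
    have [s' [r'' [h' e]]] := OO (pi r) (pi u) hu0.
    have [x ex] := hpi_surj s'; have [y ey] := hpi_surj r''.
    have : a (x * r - y * u).
      by apply/hpi_ker; rewrite rmorphB !rmorphM -ex -ey e subrr.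
    move/(proj2 (SA _))=> [s [hs0 es]].
    exists (s * x), (s * y); split.
      by rewrite rmorphM -ex; apply: (OM) => //; exact: SinS0.
    by apply/eqP; rewrite -subr_eq0 -!(mulrA s) -mulrBr es.
  move=> r u hu0 e.
  have : pi r * pi u = 0 by rewrite -rmorphM e rmorph0.
  move/(OL _ _ hu0)=> [t [ht et]]; have [x ex] := hpi_surj t.
  have : a (x * r) by apply/hpi_ker; rewrite rmorphM -ex.
  move/(proj2 (SA _))=> [s [hs0 es]].
  exists (s * x); split; last by rewrite -mulrA.
  by rewrite rmorphM -ex; apply: (OM) => //; exact: SinS0.
have Ui : forall r, S0 (pi r) -> Sa r.
  by move=> r h; apply: (hSamax _ U_den).
split.
- by move=> r; split; [exact: Ui | exact: SainS0].
- move=> x; split.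
    by move=> hx; have [r ex] := hpi_surj x; exists r; split=> //; apply: Ui; rewrite -ex.
  by case=> r [hr ->]; exact: SainS0.
move=> Qa siga hQa Ql tau [htu [hts htk]].
have hl : is_left_loc Sa (tau \o pi).
  split; first by move=> s hs0; apply: (htu); exact: SainS0.
  split; last first.
    by move=> r /=; rewrite htk OA hpi_ker hSa.2.
  move=> q; have [x [y [hx ->]]] := hts q.
  have [r ex] := hpi_surj x; have [r' ey] := hpi_surj y.
  exists r, r'; split; first by apply: Ui; rewrite -ex.
  by rewrite /= -ex -ey.
exact: (loc_iso hSa.1.1 hQa hl).
Qed.
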